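(* Let $A\in\mathbb{Z}^{d\times n}$ be totally unimodular, $\mathbf{b}\in\mathbb{Z}^d$, $\mathbf{c}\in\mathbb{Z}^n$, $\mathbf{u}\in\mathbb{Z}_{\ge0}^n$. Then from any feasible solution of $\min\{\mathbf{c}^\top\mathbf{x} : A\mathbf{x}=\mathbf{b},\ \mathbf{0}\le\mathbf{x}\le\mathbf{u},\ \mathbf{x}\in\mathbb{Z}^n\}$, every sequence of discrete steepest-descent augmentations reaches an optimal solution after at most $n(d+1)\|\mathbf{c}\|_1$ augmentations.
   Context: For $\mathbf{v},\mathbf{w}\in\mathbb{R}^n$ write $\mathbf{v}\sqsubseteq\mathbf{w}$ if $v_iw_i\ge0$ and $|v_i|\le|w_i|$ for all $i$; the Graver basis $\mathcal{G}(A)$ is the set of $\sqsubseteq$-minimal elements of $(\ker(A)\cap\mathbb{Z}^n)\setminus\{\mathbf{0}\}$. Discrete steepest-descent augmentation (ILP): given a feasible $\mathbf{x}_k$, choose $\mathbf{z}\in\mathcal{G}(A)$ maximizing $-\mathbf{c}^\top\mathbf{z}/\|\mathbf{z}\|_1$ among all $\mathbf{z}\in\mathcal{G}(A)$ with $\mathbf{x}_k+\mathbf{z}$ feasible; if this maximum is positive, let $\alpha$ be the largest integer with $\mathbf{x}_k+\alpha\mathbf{z}$ feasible and set $\mathbf{x}_{k+1}:=\mathbf{x}_k+\alpha\mathbf{z}$, otherwise stop. *)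

(* Defs.v *)
From HB Require Import structures.
From mathcomp Require Import all_boot all_order all_algebra.
Set Implicit Arguments. Unset Strict Implicit. Unset Printing Implicit Defensive.
Import Order.TTheory GRing.Theory Num.Theory.
Local Open Scope ring_scope.

Definition totally_unimodular (d n : nat) (A : 'M[int]_(d, n)) : Prop :=
  forall (k : nat) (f : 'I_k -> 'I_d) (g : 'I_k -> 'I_n),
    injective f -> injective g ->
    \det (mxsub f g A) \in [:: -1; 0; 1].

Definition norm1 (n : nat) (v : 'cV[int]_n) : int := \sum_i `|v i 0|.
Definition dotv (n : nat) (c x : 'cV[int]_n) : int := \sum_i c i 0 * x i 0.

Definition conformal (n : nat) (v w : 'cV[int]_n) : Prop :=
  forall i, 0 <= v i 0 * w i 0 /\ `|v i 0| <= `|w i 0|.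

Definition in_graver (d n : nat) (A : 'M[int]_(d, n)) (z : 'cV[int]_n) : Prop :=
  [/\ A *m z = 0, z != 0 &
      forall w : 'cV[int]_n, A *m w = 0 -> w != 0 -> conformal w z -> w = z].

Definition feasible (d n : nat) (A : 'M[int]_(d, n)) (b : 'cV[int]_d)
  (u x : 'cV[int]_n) : Prop :=
  A *m x = b /\ forall i, 0 <= x i 0 <= u i 0.

Definition optimal (d n : nat) (A : 'M[int]_(d, n)) (b : 'cV[int]_d)
  (c u x : 'cV[int]_n) : Prop :=
  feasible A b u x /\
  forall y, feasible A b u y -> dotv c x <= dotv c y.

Definition sd_ratio (n : nat) (c z : 'cV[int]_n) : rat :=
  (- dotv c z)%:~R / (norm1 z)%:~R.

Definition sd_step (d n : nat) (A : 'M[int]_(d, n)) (b : 'cV[int]_d)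
  (c u x y : 'cV[int]_n) : Prop :=
  exists (z : 'cV[int]_n) (alpha : int),
    [/\ in_graver A z, feasible A b u (x + z),
        (forall z', in_graver A z' -> feasible A b u (x + z') ->
                    sd_ratio c z' <= sd_ratio c z)
      & 0 < sd_ratio c z] /\
    [/\ feasible A b u (x + alpha *: z),
        (forall beta : int, feasible A b u (x + beta *: z) -> beta <= alpha)
      & y = x + alpha *: z].

(* the stopping condition: the maximum ratio over admissible Graver
   elements is not positive (vacuous maximum included) *)
Definition sd_stops (d n : nat) (A : 'M[int]_(d, n)) (b : 'cV[int]_d)
  (c u x : 'cV[int]_n) : Prop :=
  forall z, in_graver A z -> feasible A b u (x + z) -> sd_ratio c z <= 0.

(* Main.v *)
Require Import Defs.
From HB Require Import structures.
From mathcomp Require Import all_boot all_order all_algebra.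
From mathcomp Require Import zify ring lra.
From Stdlib Require Classical_Prop.
Import Order.TTheory GRing.Theory Num.Theory.
Local Open Scope ring_scope.
Set Implicit Arguments. Unset Strict Implicit. Unset Printing Implicit Defensive.
Section P1.
Variables (d n : nat) (A : 'M[int]_(d, n)) (b : 'cV[int]_d) (c u : 'cV[int]_n).

Lemma dotvD (v w : 'cV[int]_n) : dotv c (v + w) = dotv c v + dotv c w.
Proof. by rewrite /dotv -big_split /=; apply: eq_bigr => i _; rewrite mxE mulrDr. Qed.

Lemma dotvB (v w : 'cV[int]_n) : dotv c (v - w) = dotv c v - dotv c w.
Proof.
rewrite /dotv -sumrB /=; apply: eq_bigr => i _; rewrite !mxE mulrBr //.
Qed.

Lemma dotvZ (a : int) (v : 'cV[int]_n) : dotv c (a *: v) = a * dotv c v.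
Proof. by rewrite /dotv mulr_sumr; apply: eq_bigr => i _; rewrite mxE mulrCA. Qed.

Lemma dotv0 : dotv c 0 = 0.
Proof. by rewrite /dotv big1 // => i _; rewrite mxE mulr0. Qed.

Lemma norm1_ge0 (v : 'cV[int]_n) : 0 <= norm1 v.
Proof. by rewrite /norm1 sumr_ge0. Qed.

Lemma norm1_eq0 (v : 'cV[int]_n) : norm1 v = 0 -> v = 0.
Proof.
move=> h; apply/matrixP => i j; rewrite (ord1 j) mxE.
have := psumr_eq0P (P := predT) (F := fun k => `|v k 0|) (fun k _ => normr_ge0 _) h.
by move=> /(_ i isT) /eqP; rewrite normr_eq0 => /eqP.
Qed.

Lemma norm1_gt0 (v : 'cV[int]_n) : v != 0 -> 0 < norm1 v.
Proof.
move=> hv; rewrite lt_neqAle norm1_ge0 andbT eq_sym; apply/eqP => /norm1_eq0 h.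
by rewrite h eqxx in hv.
Qed.

Lemma norm1_0 : norm1 (0 : 'cV[int]_n) = 0.
Proof. by rewrite /norm1 big1 // => i _; rewrite mxE. Qed.

Lemma conf_trans (x y z : 'cV[int]_n) : conformal x y -> conformal y z -> conformal x z.
Proof.
move=> h1 h2 i; have [a1 a2] := h1 i; have [b1 b2] := h2 i; split; last lia.
move: a1 a2 b1 b2; set p := x i 0; set q := y i 0; set r := z i 0 => a1 a2 b1 b2.
case: (ltrgtP p 0) => hp; case: (ltrgtP q 0) => hq; case: (ltrgtP r 0) => hr; nia.
Qed.

Lemma conf_refl (x : 'cV[int]_n) : conformal x x.
Proof. move=> i; split; [nia | lia]. Qed.

Lemma conf_subr (w z : 'cV[int]_n) : conformal w z -> conformal (z - w) z.
Proof.
move=> h i; have [a1 a2] := h i; rewrite !mxE; move: a1 a2.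
set p := w i 0; set q := z i 0 => a1 a2.
case: (ltrgtP p 0) => hp; case: (ltrgtP q 0) => hq; split; nia.
Qed.

Lemma norm1_conf (w z : 'cV[int]_n) : conformal w z ->
  norm1 z = norm1 w + norm1 (z - w).
Proof.
move=> h; rewrite /norm1 -big_split /=; apply: eq_bigr => i _.
have [a1 a2] := h i; rewrite !mxE; move: a1 a2.
set p := w i 0; set q := z i 0 => a1 a2.
case: (ltrgtP p 0) => hp; case: (ltrgtP q 0) => hq; nia.
Qed.

Lemma conf_lt (w z : 'cV[int]_n) : conformal w z -> w != z -> norm1 w < norm1 z.
Proof.
move=> h hne; rewrite (norm1_conf h) ltrDl norm1_gt0 // subr_eq0 eq_sym //.
Qed.

Lemma graver_below (w : 'cV[int]_n) : A *m w = 0 -> w != 0 ->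
  exists g, in_graver A g /\ conformal g w.
Proof.
move: (norm1_ge0 w); have [N hN] : exists N : nat, norm1 w < N%:Z.
  by exists (absz (norm1 w)).+1; have := norm1_ge0 w; lia.
elim: N w hN => [|N IH] w hN hw0 Aw wn0; first lia.
case: (Classical_Prop.classic (exists g, in_graver A g /\ conformal g w)) => [//|hno].
exfalso; apply: (hno); exists w; split; last exact: conf_refl.
split => // w' Aw' w'n0 cw'.
case: (Classical_Prop.classic (w' = w)) => [//|hne].
have hlt : norm1 w' < norm1 w by apply: conf_lt => //; apply/eqP.
have [g [gg cg]] : exists g, in_graver A g /\ conformal g w'.
  apply: (IH w') => //; [lia | exact: norm1_ge0].
by exfalso; apply: hno; exists g; split => //; apply: conf_trans cw'.
Qed.

Lemma feas_kernel (x w : 'cV[int]_n) : feasible A b u x -> feasible A b u (x + w) ->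
  A *m w = 0.
Proof.
move=> [h1 _] [h2 _].
by apply: (@addrI _ (A *m x)); rewrite -mulmxDr h2 h1 addr0.
Qed.

Lemma feas_conf (x w W : 'cV[int]_n) : feasible A b u x -> feasible A b u (x + W) ->
  conformal w W -> A *m w = 0 -> feasible A b u (x + w).
Proof.
move=> [h1 h2] [h3 h4] cw Aw; split; first by rewrite mulmxDr h1 Aw addr0.
move=> i; have := h2 i; have := h4 i; have [a1 a2] := cw i; rewrite !mxE.
move: a1 a2; set p := w i 0; set q := W i 0; set y := x i 0; set U := u i 0.
move=> a1 a2 /andP [b1 b2] /andP [b3 b4]; apply/andP.
case: (ltrgtP p 0) => hp; case: (ltrgtP q 0) => hq; split; nia.
Qed.

Lemma descent_bound (p q : int) (x : 'cV[int]_n) : feasible A b u x ->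
  (forall z, in_graver A z -> feasible A b u (x + z) -> q * (- dotv c z) <= p * norm1 z) ->
  forall w, feasible A b u (x + w) -> q * (- dotv c w) <= p * norm1 w.
Proof.
move=> fx H w.
have [N hN] : exists N : nat, norm1 w < N%:Z.
  by exists (absz (norm1 w)).+1; have := norm1_ge0 w; lia.
elim: N w hN => [|N IH] w hN fw; first by have := norm1_ge0 w; lia.
have Aw := feas_kernel fx fw.
case: (eqVneq w 0) => [->|wn0]; first by rewrite dotv0 norm1_0 oppr0 !mulr0.
have [g [gg cg]] := graver_below Aw wn0.
have fg : feasible A b u (x + g) by apply: feas_conf fx fw cg _; case: gg.
have cr := conf_subr cg.
have fr : feasible A b u (x + (w - g)).
  apply: feas_conf fx fw cr _; rewrite mulmxBr Aw; case: gg => -> _ _; exact: subrr.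
have e := norm1_conf cg.
have gpos : 0 < norm1 g by apply: norm1_gt0; case: gg.
have h1 := H g gg fg.
have h2 : q * - dotv c (w - g) <= p * norm1 (w - g).
  by apply: IH => //; lia.
have ew : dotv c w = dotv c g + dotv c (w - g) by rewrite -dotvD addrC subrK.
by rewrite ew e opprD !mulrDr; apply: lerD.
Qed.
End P1.
Section ML.
Variables (d n : nat) (AT : 'M[rat]_(n, d)) (z : 'cV[int]_n).

Definition suppr (v : 'rV[rat]_n) : {set 'I_n} := [set i | v 0 i != 0].

Definition confz (v : 'rV[rat]_n) : Prop :=
  forall i, 0 <= v 0 i * (z i 0)%:~R /\ (z i 0 = 0 -> v 0 i = 0).

Variable v : 'rV[rat]_n.
Hypotheses (vker : v *m AT = 0) (vn0 : v != 0) (vconf : confz v)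
  (vmin : forall v', v' *m AT = 0 -> v' != 0 -> confz v' -> (#|suppr v| <= #|suppr v'|)%N).

Lemma ML (w : 'rV[rat]_n) : w *m AT = 0 -> suppr w \subset suppr v -> (w <= v)%MS.
Proof.
move=> wker wsub; case: (boolP (w <= v)%MS) => // hn; exfalso.
have [j0 hj0] := rV0Pn _ vn0.
have wS : forall i, v 0 i = 0 -> w 0 i = 0.
  move=> i vi; apply/eqP; apply: contraT => wi.
  have : i \in suppr w by rewrite inE.
  by move/(subsetP wsub); rewrite inE vi eqxx.
pose a := w 0 j0 / v 0 j0.
pose y := w - a *: v.
have yker : y *m AT = 0 by rewrite mulmxBl -scalemxAl vker wker scaler0 subrr.
have yj0 : y 0 j0 = 0.
  by rewrite !mxE /a divfK // subrr.
have yS : forall i, v 0 i = 0 -> y 0 i = 0.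
  by move=> i vi; rewrite !mxE vi wS // mulr0 subrr.
have yn0 : y != 0.
  apply/eqP => y0; move/negP: hn; apply.
  have -> : w = a *: v by apply/eqP; rewrite -subr_eq0 -/y y0.
  by rewrite scalemx_sub // submx_refl.
have [i1 hi1] := rV0Pn _ yn0.
have vi1 : v 0 i1 != 0 by apply: contra hi1 => /eqP /yS ->.
pose s : rat := if 0 < y 0 i1 * v 0 i1 then 1 else -1.
pose y' := s *: y.
have y'E : forall i, y' 0 i = s * y 0 i by move=> i; rewrite mxE.
have sP : s * s = 1 by rewrite /s; case: ifP => _; rewrite ?mulr1 ?mulrNN ?mulr1.
have P1 : 0 < y' 0 i1 * v 0 i1.
  have hne : y 0 i1 * v 0 i1 != 0 by rewrite mulf_neq0.
  rewrite y'E /s; case: ifP => h; first by rewrite mul1r.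
  by rewrite mulN1r mulNr oppr_gt0 lt_neqAle hne /= leNgt h.
pose P := fun i => 0 < y' 0 i * v 0 i.
pose F := fun i => v 0 i / y' 0 i.
have [i0 Pi0 i0min] := @arg_minP _ _ _ i1 P F P1.
pose t := F i0.
have y'i0 : y' 0 i0 != 0 by apply/eqP => e; move: Pi0; rewrite /P e mul0r ltxx.
have vi0 : v 0 i0 != 0 by apply/eqP => e; move: Pi0; rewrite /P e mulr0 ltxx.
have FE : forall i, y' 0 i != 0 -> v 0 i = F i * y' 0 i by move=> i h; rewrite /F divfK.
have tpos : 0 < t.
  have := Pi0; rewrite /P (FE _ y'i0) -/t => h.
  have h2 : 0 < y' 0 i0 ^+ 2 by rewrite lt_def sqrf_eq0 y'i0 sqr_ge0.
  nra.
pose v' := v - t *: y'.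
have v'ker : v' *m AT = 0.
  by rewrite /v' /y' mulmxBl -!scalemxAl yker !scaler0 vker subrr.
have v'E : forall i, v' 0 i = v 0 i - t * y' 0 i.
  by move=> i; rewrite !mxE.
have v'j0 : v' 0 j0 = v 0 j0 by rewrite v'E y'E yj0 !mulr0 subr0.
have v'n0 : v' != 0 by apply/rV0Pn; exists j0; rewrite v'j0.
have v'S : forall i, v 0 i = 0 -> v' 0 i = 0.
  by move=> i vi; rewrite v'E y'E yS // vi mulr0 mulr0 subrr.
have v'v : forall i, 0 <= v' 0 i * v 0 i.
  move=> i; case: (eqVneq (v 0 i) 0) => [->|vin0]; first by rewrite mulr0.
  rewrite v'E.
  case: (boolP (P i)) => Pi.
    have hle : t <= F i := i0min i Pi.
    have y'in0 : y' 0 i != 0 by apply/eqP => e; move: Pi; rewrite /P e mul0r ltxx.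
    move: Pi; rewrite /P (FE _ y'in0) => Pi.
    have h2 : 0 < y' 0 i ^+ 2 by rewrite lt_def sqrf_eq0 y'in0 sqr_ge0.
    nra.
  move: Pi; rewrite /P -leNgt => Pi.
  nra.
have v'i0 : v' 0 i0 = 0 by rewrite v'E /t (FE _ y'i0) subrr.
have v'conf : confz v'.
  move=> i; split; last by move=> /(proj2 (vconf i)) /v'S.
  case: (eqVneq (v 0 i) 0) => [/v'S ->|vin0]; first by rewrite mul0r.
  have := v'v i; have := proj1 (vconf i).
  have h2 : 0 < v 0 i ^+ 2 by rewrite lt_def sqrf_eq0 vin0 sqr_ge0.
  move=> h3 h4; nra.
have := vmin v'ker v'n0 v'conf; apply/negP; rewrite -ltnNge.
apply: proper_card; apply/properP; split.
  by apply/subsetP => i; rewrite !inE; apply: contra => /eqP /v'S ->.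
by exists i0; rewrite !inE ?v'i0 ?eqxx.
Qed.
End ML.
Section Cof.
Variable R : comNzRingType.

Definition cofv k (M : 'M[R]_(k, k.+1)) : 'rV[R]_k.+1 :=
  \row_j ((-1) ^+ j * \det (colsub (lift j) M)).

Definition extm k (x : 'rV[R]_k.+1) (M : 'M[R]_(k, k.+1)) : 'M[R]_k.+1 :=
  \matrix_(i, j) (if unlift 0 i is Some i' then M i' j else x 0 j).

Lemma det_extm k (x : 'rV[R]_k.+1) (M : 'M[R]_(k, k.+1)) :
  \det (extm x M) = \sum_j x 0 j * cofv M 0 j.
Proof.
rewrite (expand_det_row _ 0); apply: eq_bigr => j _.
rewrite /cofactor !mxE unlift_none add0n; congr (_ * (_ * _)).
congr (\det _); apply/matrixP => i' j'; rewrite !mxE liftK //.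
Qed.

Lemma cof_ker k (M : 'M[R]_(k, k.+1)) : M *m (cofv M)^T = 0.
Proof.
apply/matrixP => a b; rewrite (ord1 b) !mxE.
have : \det (extm (row a M) M) = 0.
  apply: (@determinant_alternate _ _ _ 0 (lift 0 a)); first by rewrite neq_lift.
  by move=> j; rewrite !mxE liftK unlift_none.
move=> h; rewrite -[RHS]h det_extm; apply: eq_bigr => j _; rewrite !mxE //.
Qed.
End Cof.

Lemma cof_nz (F : fieldType) k (M : 'M[F]_(k, k.+1)) : row_free M -> cofv M != 0.
Proof.
move=> rfM; apply/eqP => c0.
have rM : \rank M = k by apply/eqP; rewrite eqn_leq rank_leq_row row_leq_rank.
have : ~~ (1%:M <= M)%MS.
  apply/negP => /mxrankS; rewrite mxrank1 rM ltnn //.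
case/row_subPn => i hi; set x := row i 1%:M in hi.
have : \det (extm x M) = 0.
  by rewrite det_extm c0 big1 // => j _; rewrite !mxE mulr0.
apply/eqP; rewrite -unitfE -unitmxE -row_full_unit -col_leq_rank.
have xN : (x <= extm x M)%MS.
  have e : x = row 0 (extm x M) by apply/rowP => j; rewrite !mxE unlift_none.
  rewrite {1}e; exact: row_sub.
have MN : (M <= extm x M)%MS.
  apply/row_subP => i'; have -> : row i' M = row (lift 0 i') (extm x M).
    by apply/rowP => j; rewrite !mxE liftK.
  exact: row_sub.
have lt : (M < x + M)%MS.
  rewrite ltmxE addsmxSr /=; apply/negP => h; move/negP: hi; apply.
  exact: submx_trans (addsmxSl _ _) h.
have h1 := rank_ltmx lt.
have h2 : (\rank (x + M)%MS <= \rank (extm x M))%N.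
  by apply: mxrankS; rewrite addsmx_sub xN MN.
rewrite rM in h1; exact: leq_trans h1 h2.
Qed.
Lemma maxrank_sub (F : fieldType) (m p q : nat) (X : 'M[F]_(m, q)) :
  \rank X = p -> exists f : 'I_p -> 'I_m,
    [/\ injective f, row_free (rowsub f X) & (X <= rowsub f X)%MS].
Proof.
move=> hr; case: p / hr; exists (maxrankfun X); split.
- exact: maxrankfun_inj.
- exact: maxrowsub_free.
- by rewrite eq_maxrowsub.
Qed.

Section Key.
Variables (d n : nat) (A : 'M[int]_(d, n)) (z : 'cV[int]_n).
Hypothesis TU : totally_unimodular A.
Definition ATq : 'M[rat]_(n, d) := (map_mx (intr : int -> rat) A)^T.
Variable v : 'rV[rat]_n.
Hypotheses (vker : v *m ATq = 0) (vn0 : v != 0) (vconf : confz z v)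
  (vmin : forall v', v' *m ATq = 0 -> v' != 0 -> confz z v' -> (#|suppr v| <= #|suppr v'|)%N).

Lemma key_gen k (g : 'I_k.+1 -> 'I_n) (ginj : injective g)
  (gS : forall j, g j \in suppr v) (Sg : forall i, i \in suppr v -> exists j, g j = i) :
  exists w : 'rV[rat]_n, [/\ w *m ATq = 0, w != 0,
    (forall i, w 0 i = 0 \/ w 0 i = 1 \/ w 0 i = -1), suppr w \subset suppr v & (k <= d)%N].
Proof.
have ML' := ML vker vn0 vconf vmin.
pose E : 'M[rat]_(k.+1, n) := \matrix_(j, i) ((g j == i)%:R).
pose B := E *m ATq.
have sumg : forall (F : 'I_k.+1 -> rat) j0, \sum_j F j * (g j == g j0)%:R = F j0.
  move=> F j0; rewrite (bigD1 j0) //= eqxx mulr1 big1 ?addr0 // => j hj.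
  by rewrite (inj_eq ginj) (negPf hj) mulr0.
have e1 : forall u : 'rV[rat]_n, suppr u \subset suppr v -> colsub g u *m E = u.
  move=> u hu; apply/rowP => i; rewrite !mxE.
  case: (boolP (i \in suppr v)) => iS.
    have [j0 <-] := Sg i iS.
    by rewrite -[RHS](sumg (fun j => u 0 (g j)) j0); apply: eq_bigr => j _; rewrite !mxE.
  rewrite big1; last first.
    move=> j _; rewrite !mxE; case: eqP => [e|_]; last by rewrite mulr0.
    by move: (gS j); rewrite e (negPf iS).
  apply/esym/eqP; apply: contraT => ui; move: iS; rewrite (subsetP hu) //.
  by rewrite inE.
have e2 : forall w : 'rV[rat]_k.+1, colsub g (w *m E) = w.
  move=> w; apply/rowP => j; rewrite !mxE.
  by rewrite -[RHS](sumg (fun j => w 0 j) j); apply: eq_bigr => j' _; rewrite !mxE.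
have e3 : forall w : 'rV[rat]_k.+1, suppr (w *m E) \subset suppr v.
  move=> w; apply/subsetP => i; rewrite inE; apply: contraR => iS.
  rewrite !mxE big1 // => j _; rewrite !mxE; case: eqP => [e|_]; last by rewrite mulr0.
  by move: (gS j); rewrite e (negPf iS).
pose vS := colsub g v.
have vSB : vS *m B = 0 by rewrite /B mulmxA e1 ?subxx.
have vSn0 : vS != 0.
  by apply: contra vn0 => /eqP h; rewrite -(e1 v (subxx _)) -/vS h mul0mx.
have rBlt : (\rank B < k.+1)%N.
  rewrite ltnNge row_leq_rank; apply/negP => rf.
  by move: vSn0; rewrite -(mulmx_free_eq0 _ rf) vSB eqxx.
have kerB : (kermx B <= vS)%MS.
  apply/row_subP => i; set r := row i (kermx B).
  have rB : r *m B = 0 by rewrite /r -row_mul mulmx_ker row0.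
  have rh : (r *m E <= v)%MS by apply: ML' => //; rewrite -mulmxA.
  have /sub_rVP [a ha] := rh.
  have -> : r = a *: vS by rewrite -(e2 r) ha; apply/rowP => j; rewrite !mxE.
  by rewrite scalemx_sub // submx_refl.
have rB : \rank B = k.
  have := mxrankS kerB; rewrite mxrank_ker => h1.
  have h2 := rank_leq_row vS.
  apply/eqP; rewrite eqn_leq -ltnS rBlt /=.
  by move: h1 h2; move: (\rank B) (\rank vS) rBlt => x y; lia.
have kd : (k <= d)%N by rewrite -rB rank_leq_col.
have rBT : \rank B^T = k by rewrite mxrank_tr.
have [f [finj rf sub]] := maxrank_sub rBT.
pose M := rowsub f B^T.
have ME : forall a b, M a b = (A (f a) (g b))%:~R.
  move=> a b; rewrite !mxE.
  rewrite (bigD1 (g b)) //= !mxE eqxx mul1r big1 ?addr0 //.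
  by move=> j hj; rewrite !mxE eq_sym (negPf hj) mul0r.
pose w0 := cofv M.
have Mw : M *m w0^T = 0 := cof_ker M.
have w0n0 : w0 != 0 := cof_nz rf.
have w0B : w0 *m B = 0.
  have [D hD] := submxP sub.
  have : B^T *m w0^T = 0 by rewrite hD -mulmxA Mw mulmx0.
  by move/(congr1 trmx); rewrite trmx_mul !trmxK trmx0.
have w0E : forall j, w0 0 j = 0 \/ w0 0 j = 1 \/ w0 0 j = -1.
  move=> j; rewrite !mxE.
  have -> : colsub (lift j) M = map_mx (intr : int -> rat) (mxsub f (g \o lift j) A).
    apply/matrixP => a b; rewrite mxE [in RHS]mxE ME [in RHS]mxE //.
  rewrite det_map_mx.
  have := @TU _ f (g \o lift j) finj (inj_comp ginj (@lift_inj _ j)).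
  rewrite !inE -signr_odd; case/or3P => /eqP ->; case: (odd j) => /=;
    rewrite ?rmorph0 ?rmorph1 ?rmorphN1 ?expr0 ?expr1 ?mulr0 ?mulr1 ?mul1r ?mulN1r ?opprK; auto.
exists (w0 *m E); split => //.
- by rewrite -mulmxA.
- apply: contra w0n0 => /eqP h; rewrite -(e2 w0) h.
  by apply/eqP/rowP => j; rewrite !mxE.
- move=> i; case: (boolP (i \in suppr v)) => iS.
    have [j0 <-] := Sg i iS.
    have -> : (w0 *m E) 0 (g j0) = w0 0 j0.
      rewrite mxE -[RHS](sumg (fun j => w0 0 j) j0).
      by apply: eq_bigr => j _; rewrite [E _ _]mxE.
    exact: (w0E j0).
  left; rewrite !mxE big1 // => j _; rewrite !mxE; case: eqP => [e|_]; last by rewrite mulr0.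
  by move: (gS j); rewrite e (negPf iS).
Qed.
End Key.
Lemma min_ex n (P : 'rV[rat]_n -> Prop) (v0 : 'rV[rat]_n) : P v0 ->
  exists v, P v /\ forall v', P v' -> (#|suppr v| <= #|suppr v'|)%N.
Proof.
move: (leqnn #|suppr v0|); move: {2}#|suppr v0| => N.
elim: N v0 => [|N IH] v0 hN Pv0.
  exists v0; split => // v' _; move: hN; rewrite leqn0 => /eqP ->; done.
case: (Classical_Prop.classic (exists v', P v' /\ (#|suppr v'| < #|suppr v0|)%N)).
  by case=> v' [Pv' hv']; apply: (IH v') => //; rewrite -ltnS; apply: leq_trans hv' hN.
move=> hno; exists v0; split => // v' Pv'; rewrite leqNgt; apply/negP => h.
by apply: hno; exists v'.
Qed.

Lemma TU_graver d n (A : 'M[int]_(d, n)) (z : 'cV[int]_n) :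
  totally_unimodular A -> in_graver A z ->
  (forall i, `|z i 0| <= 1) /\ norm1 z <= (d.+1)%:Z.
Proof.
move=> TU [Az zn0 zmin].
pose zq : 'rV[rat]_n := (map_mx (intr : int -> rat) z)^T.
have zqE : forall i, zq 0 i = (z i 0)%:~R by move=> i; rewrite !mxE.
have zqker : zq *m ATq A = 0.
  by rewrite /zq /ATq -trmx_mul -map_mxM Az map_mx0 trmx0.
have zqn0 : zq != 0.
  apply: contra zn0 => /eqP h; apply/eqP/matrixP => i j; rewrite (ord1 j).
  by apply/eqP; rewrite [X in _ == X]mxE -(intr_eq0 rat) -zqE h mxE.
have zqc : confz z zq.
  by move=> i; rewrite zqE; split; [rewrite -expr2 sqr_ge0 | move=> ->].
have [v [[vker [vn0 vconf]] vmin]] :=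
  @min_ex n (fun v => v *m ATq A = 0 /\ v != 0 /\ confz z v) zq (conj zqker (conj zqn0 zqc)).
have vmin' : forall v', v' *m ATq A = 0 -> v' != 0 -> confz z v' ->
    (#|suppr v| <= #|suppr v'|)%N by move=> v' h1 h2 h3; apply: vmin.
have [i1 hi1] := rV0Pn _ vn0.
have Sgt0 : (0 < #|suppr v|)%N by apply/card_gt0P; exists i1; rewrite inE.
set k := #|suppr v|.-1.
have e : #|suppr v| = k.+1 by rewrite prednK.
pose g := fun j : 'I_k.+1 => (enum_val (cast_ord (esym e) j) : 'I_n).
have ginj : injective g.
  by move=> j1 j2 /enum_val_inj /cast_ord_inj.
have gS : forall j, g j \in suppr v by move=> j; exact: enum_valP.
have Sg : forall i, i \in suppr v -> exists j, g j = i.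
  move=> i iS; exists (cast_ord e (enum_rank_in iS i)).
  by rewrite /g cast_ordK enum_rankK_in.
have [w [wker wn0 wE wS kd]] := key_gen TU vker vn0 vconf vmin' ginj gS Sg.
have /sub_rVP [a ha] := ML vker vn0 vconf vmin' wker wS.
have an0 : a != 0 by apply: contra wn0 => /eqP a0; rewrite ha a0 scale0r.
pose w' := if 0 < a then w else - w.
have w'E : forall i, w' 0 i = `|a| * v 0 i.
  move=> i; rewrite /w'; case: ifP => ha0.
    by rewrite gtr0_norm // ha mxE.
  have : a < 0 by rewrite lt_neqAle an0 leNgt ha0.
  by move=> h; rewrite ltr0_norm // ha !mxE mulNr.
have w'v : forall i, w' 0 i = 0 \/ w' 0 i = 1 \/ w' 0 i = -1.
  move=> i; rewrite /w'; case: ifP => _; first exact: wE.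
  rewrite mxE; case: (wE i) => [->|[->|->]]; rewrite ?oppr0 ?opprK; auto.
have w'0 : forall i, w 0 i = 0 -> w' 0 i = 0.
  by move=> i h; rewrite /w'; case: ifP => _; rewrite ?mxE h ?oppr0.
have w'n0 : forall i, w 0 i != 0 -> w' 0 i != 0.
  by move=> i h; rewrite /w'; case: ifP => _; rewrite ?mxE ?oppr_eq0.
have w'ker : w' *m ATq A = 0.
  by rewrite /w'; case: ifP => _; rewrite ?mulNmx wker ?oppr0.
pose cz : 'cV[int]_n := \col_i (if w' 0 i == 1 then 1 else if w' 0 i == -1 then -1 else 0).
have czE : forall i, (cz i 0)%:~R = w' 0 i.
  move=> i; rewrite mxE; case: (w'v i) => [->|[->|->]] //=.
have czv : forall i, cz i 0 = 0 \/ cz i 0 = 1 \/ cz i 0 = -1.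
  by move=> i; rewrite mxE; case: ifP => _; [|case: ifP => _]; auto.
have Acz : A *m cz = 0.
  apply/matrixP => a' b; rewrite (ord1 b) [RHS]mxE; apply/eqP; rewrite -(intr_eq0 rat); apply/eqP.
  have := congr1 (fun M : 'rV[rat]_d => M 0 a') w'ker; rewrite [RHS]mxE => <-.
  rewrite !mxE rmorph_sum; apply: eq_bigr => i _.
  rewrite rmorphM mulrC; congr (_ * _); [exact: czE | by rewrite !mxE].
have czn0 : cz != 0.
  have [i hi] := rV0Pn _ wn0.
  apply/eqP => h; move: (w'n0 _ hi); rewrite -czE h mxE eqxx //.
have czc : conformal cz z.
  move=> i; split.
    by rewrite -(ler0z rat) intrM czE w'E -mulrA mulr_ge0 // (proj1 (vconf i)).
  case: (eqVneq (cz i 0) 0) => [->|h]; first by rewrite normr0.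
  have hw : w' 0 i != 0 by rewrite -czE intr_eq0.
  have hv : v 0 i != 0 by apply: contra hw => /eqP h'; rewrite w'E h' mulr0.
  have hz : z i 0 != 0 by apply: contra hv => /eqP h'; rewrite (proj2 (vconf i) h').
  move: hz; case: (czv i) => [e0|[e0|e0]]; rewrite e0; lia.
have czz := zmin cz Acz czn0 czc.
split; first by move=> i; rewrite -czz; case: (czv i) => [->|[->|->]].
rewrite -czz /norm1.
apply: (@le_trans _ _ (\sum_i ((i \in suppr v)%:R : int))).
  apply: ler_sum => i _; case: (boolP (i \in suppr v)) => iS.
    by case: (czv i) => [->|[->|->]].
  have : w 0 i = 0.
    apply/eqP; apply: contraT => h; move: iS; rewrite (subsetP wS) //.
    by rewrite inE.
  move/w'0; rewrite -czE => /eqP; rewrite intr_eq0 => /eqP ->; done.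
have -> : \sum_i ((i \in suppr v)%:R : int) = \sum_(i in suppr v) (1 : int).
  by rewrite [RHS]big_mkcond /=; apply: eq_bigr => i _; case: (i \in suppr v).
rewrite sumr_const e; have : (k.+1 <= d.+1)%N by [].
lia.
Qed.
Section P4.
Variables (d n : nat) (A : 'M[int]_(d, n)) (b : 'cV[int]_d) (c u : 'cV[int]_n).

Definition isfeas x := feasible A b u x.

Lemma norm1_triangle (a : int) (g h : 'cV[int]_n) : 0 <= a ->
  norm1 (a *: g + h) <= a * norm1 g + norm1 h.
Proof.
move=> a0; rewrite /norm1 mulr_sumr -big_split /=; apply: ler_sum => i _.
rewrite !mxE; have := ler_normD (a * g i 0) (h i 0); rewrite normrM ger0_norm //.
Qed.

Lemma norm1_slack (a : int) (g h : 'cV[int]_n) : 0 < a ->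
  a * norm1 g + norm1 h <= norm1 (a *: g + h) -> forall i, 0 <= g i 0 * h i 0.
Proof.
move=> a0 hle i.
pose F := fun j => a * `|g j 0| + `|h j 0| - `|a * g j 0 + h j 0|.
have Fge : forall j, 0 <= F j.
  by move=> j; rewrite /F subr_ge0; have := ler_normD (a * g j 0) (h j 0); rewrite normrM gtr0_norm.
have hs : \sum_j F j = 0.
  apply/eqP; rewrite eq_le; apply/andP; split; last by apply: sumr_ge0 => j _; exact: Fge.
  rewrite /F sumrB big_split /= -mulr_sumr subr_le0.
  by move: hle; rewrite /norm1; under [X in _ <= X -> _]eq_bigr do rewrite !mxE.
have := @psumr_eq0P _ _ predT F (fun j _ => Fge j) hs i isT.
rewrite /F => /eqP; rewrite subr_eq0 => /eqP e.
move: e; set p := g i 0; set q := h i 0 => e.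
case: (ltrgtP p 0) => hp; case: (ltrgtP q 0) => hq; nia.
Qed.

Lemma stepM (x g : 'cV[int]_n) (al : int) :
  isfeas x -> in_graver A g -> isfeas (x + g) ->
  (forall z', in_graver A z' -> isfeas (x + z') ->
     (- dotv c z') * norm1 g <= (- dotv c g) * norm1 z') ->
  0 < - dotv c g -> 1 <= al ->
  forall h, in_graver A h -> isfeas (x + al *: g + h) ->
  (- dotv c h) * norm1 g <= (- dotv c g) * norm1 h /\
  ((- dotv c h) * norm1 g = (- dotv c g) * norm1 h -> forall i, 0 <= g i 0 * h i 0).
Proof.
move=> fx gg fg gmax Ppos al1 h hg fh.
have Ngt : 0 < norm1 g by apply: norm1_gt0; case: gg.
have DB := @descent_bound d n A b c u (- dotv c g) (norm1 g) x fx.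
have DB' := DB (fun z' hz' fz' => ltac:(rewrite mulrC; exact: gmax z' hz' fz')).
have := DB' (al *: g + h); rewrite addrA => /(_ fh).
rewrite dotvD dotvZ => h1.
have h2 := @norm1_triangle al g h (le_trans ler01 al1).
move: h1 h2; set P := - dotv c g; set N := norm1 g; set Q := - dotv c h.
set H := norm1 h; set W := norm1 (al *: g + h).
have -> : - (al * dotv c g + dotv c h) = al * P + Q by rewrite /P /Q; lra.
move=> h1 h2.
have h3 : P * W <= P * (al * N + H) by rewrite ler_pM2l.
split; first nia.
move=> e; apply: (norm1_slack (a := al)); first lia.
rewrite -/N -/H -/W; nia.
Qed.


Lemma shrink (x g h : 'cV[int]_n) (al : int) : isfeas x -> 0 <= al ->
  isfeas (x + al *: g + h) -> A *m h = 0 -> (forall i, 0 <= g i 0 * h i 0) ->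
  isfeas (x + h).
Proof.
move=> [h1 h2] al0 [_ h4] Ah gh; split; first by rewrite mulmxDr h1 Ah addr0.
move=> i; have := h2 i; have := h4 i; have := gh i; rewrite !mxE.
set p := g i 0; set q := h i 0; set y := x i 0; set U := u i 0.
move=> a1 /andP [b1 b2] /andP [b3 b4]; apply/andP.
case: (ltrgtP p 0) => hp; case: (ltrgtP q 0) => hq; split; nia.
Qed.

Lemma block (x g : 'cV[int]_n) (al : int) : (forall i, `|g i 0| <= 1) ->
  isfeas x -> isfeas (x + al *: g) -> (forall be, isfeas (x + be *: g) -> be <= al) ->
  A *m g = 0 ->
  exists i, g i 0 != 0 /\ forall h : 'cV[int]_n, (forall j, `|h j 0| <= 1) ->
    isfeas (x + al *: g + h) -> 0 <= g i 0 * h i 0 -> h i 0 = 0.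
Proof.
move=> g1 fx fa amax Ag.
case: (boolP [forall i, 0 <= (x + (al + 1) *: g) i 0 <= u i 0]) => hall.
  exfalso; have : isfeas (x + (al + 1) *: g).
    split; last by move=> i; move/forallP: hall => /(_ i).
    by rewrite mulmxDr -scalemxAr Ag scaler0 addr0; case: fx.
  by move/amax; lia.
move/forallPn: hall => [i hi]; exists i.
have [_ h2] := fx; have := h2 i; move: hi; rewrite !mxE.
set p := g i 0; set y := x i 0; set U := u i 0 => hi h2i.
have gi : p != 0 by apply: contra hi => /eqP ->; rewrite mulr0 addr0.
split => // h h1 [_ fh] gh.
have := fh i; have := h1 i; have := g1 i; rewrite !mxE -/p -/y -/U.
set q := h i 0 => a1 a2 a3.
apply/eqP; apply: contraT => qn0; move: hi.
have e : q = p by move: gi qn0; rewrite -/p -/q; nia.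
by rewrite e in a3; rewrite mulrDl mul1r addrA a3.
Qed.
End P4.
Section Rat.
Variables (n : nat) (c : 'cV[int]_n).

Lemma ratio_le (z z' : 'cV[int]_n) : 0 < norm1 z -> 0 < norm1 z' ->
  (sd_ratio c z' <= sd_ratio c z) = ((- dotv c z') * norm1 z <= (- dotv c z) * norm1 z').
Proof.
move=> h1 h2; rewrite /sd_ratio ler_pdivrMr ?ltr0z // mulrAC ler_pdivlMr ?ltr0z //.
by rewrite -!intrM ler_int.
Qed.

Lemma ratio_pos (z : 'cV[int]_n) : 0 < norm1 z -> (0 < sd_ratio c z) = (0 < - dotv c z).
Proof. by move=> h; rewrite /sd_ratio pmulr_lgt0 ?invr_gt0 ?ltr0z. Qed.

Lemma ratio_np (z : 'cV[int]_n) : 0 < norm1 z -> (sd_ratio c z <= 0) = (- dotv c z <= 0).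
Proof. by move=> h; rewrite !leNgt ratio_pos. Qed.
End Rat.
From Stdlib Require IndefiniteDescription.

Definition StepData d n (A : 'M[int]_(d, n)) (b : 'cV[int]_d) (c u : 'cV[int]_n)
  (x y : 'cV[int]_n) (t : 'cV[int]_n * int * nat) : Prop :=
 [/\ in_graver A t.1.1, feasible A b u (x + t.1.1),
     (forall z', in_graver A z' -> feasible A b u (x + z') ->
        (- dotv c z') * norm1 t.1.1 <= (- dotv c t.1.1) * norm1 z'),
     0 < - dotv c t.1.1 & 1 <= t.1.2] /\
 [/\ feasible A b u (x + t.1.2 *: t.1.1), y = x + t.1.2 *: t.1.1,
     (exists i : 'I_n, [/\ nat_of_ord i = t.2, t.1.1 i 0 != 0 &
        forall h, in_graver A h -> feasible A b u (x + t.1.2 *: t.1.1 + h) ->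
           0 <= t.1.1 i 0 * h i 0 -> h i 0 = 0]),
     (forall j, `|t.1.1 j 0| <= 1) & norm1 t.1.1 <= (d.+1)%:Z].

Lemma step_data d n (A : 'M[int]_(d, n)) (b : 'cV[int]_d) (c u x y : 'cV[int]_n) :
  totally_unimodular A -> feasible A b u x -> sd_step A b c u x y ->
  exists t, StepData A b c u x y t.
Proof.
move=> TU fx [z [al [[gz fz zmax zpos] [fa amax ->]]]].
have Ng : 0 < norm1 z by apply: norm1_gt0; case: gz.
have [z1 zN] := TU_graver TU gz.
have al1 : 1 <= al by apply: amax; rewrite scale1r.
have [i [gi hi]] := @block d n A b u x z al z1 fx fa amax (let: And3 h _ _ := gz in h).
exists (z, al, nat_of_ord i); split; split => //=.
- move=> z' gz' fz'; rewrite -ratio_le //; first exact: zmax.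
  by apply: norm1_gt0; case: gz'.
- by rewrite -ratio_pos.
- exists i; split => // h gh fh ghi; apply: hi => //.
  by have [] := TU_graver TU gh.
Qed.
Lemma dot_bound n (c g : 'cV[int]_n) : (forall j, `|g j 0| <= 1) -> - dotv c g <= norm1 c.
Proof.
move=> h; rewrite /dotv /norm1 -sumrN; apply: ler_sum => i _.
have := h i; set p := g i 0; set q := c i 0 => hp.
case: (ltrgtP p 0) => h1; case: (ltrgtP q 0) => h2; nia.
Qed.

Lemma ratio_eq n (c z z' : 'cV[int]_n) : 0 < norm1 z -> 0 < norm1 z' ->
  sd_ratio c z' = sd_ratio c z -> (- dotv c z') * norm1 z = (- dotv c z) * norm1 z'.
Proof.
move=> h1 h2 e; apply/eqP; rewrite eq_le -ratio_le // e lexx /=.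
by rewrite -ratio_le // e lexx.
Qed.

Unset Implicit Arguments.
Theorem corollary4 (d n : nat) (A : 'M[int]_(d, n)) (b : 'cV[int]_d)
  (c u : 'cV[int]_n) :
  totally_unimodular A ->
  (forall i, 0 <= u i 0) ->
  forall (xs : nat -> 'cV[int]_n) (m : nat),
    feasible A b u (xs 0%N) ->
    (forall k, (k < m)%N -> sd_step A b c u (xs k) (xs k.+1)) ->
    ((m%:Z <= (n * d.+1)%:Z * norm1 c)%R /\
     (sd_stops A b c u (xs m) -> optimal A b c u (xs m))).
Proof.
move=> TU u0 xs m f0 steps.
have feasall : forall k, (k <= m)%N -> feasible A b u (xs k).
  elim=> [|k IH] hk //.
  have [z [al [_ [fa _ ->]]]] := steps k hk.
  exact: fa.
split; last first.
  move=> hst; have fm := feasall m (leqnn m); split => // y fy.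
  have H : forall z, in_graver A z -> feasible A b u (xs m + z) -> 1 * - dotv c z <= 0 * norm1 z.
    move=> z gz fz; rewrite mul1r mul0r -(@ratio_np n c z); first exact: hst.
    by apply: norm1_gt0; case: gz.
  have := @descent_bound d n A b c u 0 1 (xs m) fm H (y - xs m).
  rewrite addrC subrK => /(_ fy); rewrite dotvB mul1r mul0r => h; lia.
have H : forall k, exists t, (k < m)%N -> StepData A b c u (xs k) (xs k.+1) t.
  move=> k; case: (ltnP k m) => hk.
    have [t ht] := step_data TU (feasall k (ltnW hk)) (steps k hk).
    by exists t.
  by exists (0, 0, 0%N).
pose F := fun k => proj1_sig (IndefiniteDescription.constructive_indefinite_description _ (H k)).
have FP : forall k, (k < m)%N -> StepData A b c u (xs k) (xs k.+1) (F k).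
  by move=> k; exact: (proj2_sig (IndefiniteDescription.constructive_indefinite_description _ (H k))).
pose g := fun k => (F k).1.1.
pose r := fun k => sd_ratio c (g k).
have gpos : forall k, (k < m)%N -> 0 < norm1 (g k).
  by move=> k hk; have [[gk _ _ _ _] _] := FP k hk; apply: norm1_gt0; case: gk.
have R1 : forall k, (k.+1 < m)%N -> r k.+1 <= r k.
  move=> k hk; have [[gk fk mk pk ak] [fak ek _ _ _]] := FP k (ltnW hk).
  have [[gk1 fk1 _ _ _] _] := FP k.+1 hk.
  rewrite ek in fk1.
  have [h1 _] := stepM (feasall k (ltnW (ltnW hk))) gk fk mk pk ak gk1 fk1.
  by rewrite /r ratio_le // ?gpos // ltnW.
have R2 : forall k l, (k <= l)%N -> (l < m)%N -> r l <= r k.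
  move=> k; elim=> [|l IH] hkl hl.
    by move: hkl; rewrite leqn0 => /eqP ->.
  case: (eqVneq k l.+1) => [->|hne]; first exact: lexx.
  apply: le_trans (R1 l hl) (IH _ (ltnW hl)).
  by rewrite -ltnS ltn_neqAle hne hkl.
pose ib := fun k => (F k).2.
have R3 : forall k l, (k < l)%N -> (l < m)%N -> r l = r k -> ib k != ib l.
  move=> k l hkl hl req.
  have hkm : (k < m)%N by apply: ltn_trans hkl hl.
  have [[gl fl _ _ _] [_ _ [il [eil gil _]] g1l _]] := FP l hl.
  have Cl : forall t, (t <= l - k.+1)%N -> feasible A b u (xs (l - t)%N + g l).
    elim=> [|t IH] ht; first by rewrite subn0.
    set j := (l - t.+1)%N.
    have hj1 : (l - t)%N = j.+1 by rewrite /j; lia.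
    have hjm : (j < m)%N by rewrite /j; lia.
    have fj1 := IH (ltnW ht); rewrite hj1 in fj1.
    have [[gj fj mj pj aj] [faj ej _ _ _]] := FP j hjm.
    rewrite ej in fj1.
    have [_ heq] := stepM (feasall j (ltnW hjm)) gj fj mj pj aj gl fj1.
    have rj : r j = r l.
      apply/eqP; rewrite eq_le; apply/andP; split.
        by rewrite req; apply: R2 => //; rewrite /j; lia.
      by apply: R2 => //; rewrite /j; lia.
    apply: (shrink (feasall j (ltnW hjm)) _ fj1).
    - exact: le_trans ler01 aj.
    - by case: gl.
    - by apply: heq; apply: ratio_eq => //; apply: gpos.
  have := Cl (l - k.+1)%N (leqnn _); rewrite subKn // => fk1.
  have [[gk fk mk pk ak] [fak ek [ik [eik gik blk]] _ _]] := FP k hkm.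
  rewrite ek in fk1.
  have [_ heq] := stepM (feasall k (ltnW hkm)) gk fk mk pk ak gl fk1.
  have hz := blk _ gl fk1 (heq (ratio_eq (gpos _ hkm) (gpos _ hl) req) ik).
  apply/eqP => e; move: gil; rewrite -/(g l).
  have -> : il = ik by apply: val_inj; rewrite /= eil eik.
  by rewrite hz eqxx.
case: (posnP m) => [->|mpos].
  by rewrite mulr_ge0 ?norm1_ge0.
have bnd : forall k, (k < m)%N ->
    [/\ 1 <= - dotv c (g k), - dotv c (g k) <= norm1 c, 1 <= norm1 (g k) & norm1 (g k) <= (d.+1)%:Z].
  move=> k hk; have [[gk _ _ pk _] [_ _ _ g1 nd]] := FP k hk.
  have := gpos k hk; have := dot_bound c g1.
  rewrite -/(g k) in pk nd * => h1 h2; split => //; lia.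
have [_ [_ _ [i0 _] _ _]] := FP 0%N mpos.
have n0 : (0 < n)%N by apply: leq_ltn_trans (leq0n i0) (ltn_ord i0).
pose C := absz (norm1 c).
have eC : norm1 c = C%:Z by rewrite /C abszE ger0_norm // norm1_ge0.
have C0 : (0 < C)%N by have [h1 h2 _ _] := bnd 0%N mpos; move: h1 h2; rewrite eC; lia.
pose Pn := fun k => absz (- dotv c (g k)).
pose Nn := fun k => absz (norm1 (g k)).
have PE : forall k, (k < m)%N -> - dotv c (g k) = (Pn k)%:Z.
  by move=> k hk; have [h1 _ _ _] := bnd k hk; rewrite /Pn abszE ger0_norm //; lia.
have NE : forall k, (k < m)%N -> norm1 (g k) = (Nn k)%:Z.
  by move=> k hk; rewrite /Nn abszE ger0_norm // norm1_ge0.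
pose fm := fun k : 'I_m => ((inord (Pn k).-1 : 'I_C.-1.+1), (inord (Nn k).-1 : 'I_d.+1),
   (inord (ib k) : 'I_n.-1.+1)).
have fminj : injective fm.
  move=> k1 k2 E.
  have [a1 a2 a3 a4] := bnd k1 (ltn_ord k1); have [b1 b2 b3 b4] := bnd k2 (ltn_ord k2).
  rewrite (PE _ (ltn_ord k1)) (NE _ (ltn_ord k1)) in a1 a2 a3 a4.
  rewrite (PE _ (ltn_ord k2)) (NE _ (ltn_ord k2)) in b1 b2 b3 b4.
  rewrite eC in a2 b2.
  have e1 := congr1 (fun p => nat_of_ord p.1.1) E.
  have e2 := congr1 (fun p => nat_of_ord p.1.2) E.
  have e3 := congr1 (fun p => nat_of_ord p.2) E.
  have [_ [_ _ [ik1 [eik1 gik1 _]] _ _]] := FP k1 (ltn_ord k1).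
  have [_ [_ _ [ik2 [eik2 gik2 _]] _ _]] := FP k2 (ltn_ord k2).
  have ib1 : ib k1 = ik1 by rewrite eik1.
  have ib2 : ib k2 = ik2 by rewrite eik2.
  have hb1 : ((Pn k1).-1 < C.-1.+1)%N by lia.
  have hb2 : ((Pn k2).-1 < C.-1.+1)%N by lia.
  have hc1 : ((Nn k1).-1 < d.+1)%N by lia.
  have hc2 : ((Nn k2).-1 < d.+1)%N by lia.
  have hd1 : (ib k1 < n.-1.+1)%N by rewrite ib1 prednK.
  have hd2 : (ib k2 < n.-1.+1)%N by rewrite ib2 prednK.
  rewrite /= !inordK // in e1 e2 e3.
  have P12 : Pn k1 = Pn k2 by lia.
  have N12 : Nn k1 = Nn k2 by lia.
  have req : r k1 = r k2.
    by rewrite /r /sd_ratio (PE _ (ltn_ord k1)) (NE _ (ltn_ord k1))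
      (PE _ (ltn_ord k2)) (NE _ (ltn_ord k2)) P12 N12.
  apply/val_inj; case: (ltngtP k1 k2) => h //.
    by move: (R3 _ _ h (ltn_ord k2) (esym req)); rewrite e3 eqxx.
  by move: (R3 _ _ h (ltn_ord k1) req); rewrite e3 eqxx.
have := leq_card fm fminj; rewrite card_prod card_prod !card_ord !prednK // => hm.
rewrite eC; move: hm; rewrite -!PoszM; lia.
Qed.
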